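(* Let $d\ge1$ and let $\sigma\subset\mathbb{R}^d$ be an object with center $c$ and width $w\ge 1$. Let $i=\lfloor\log_2 w\rfloor$. For each $j\in[d]$ write uniquely $c(x_j)=z_j+f_j$ with $z_j\in 2^{i+1}\mathbb{Z}$ and $f_j\in[0,2^{i+1})$, and define the point $r\in(2^{i+1}\mathbb{Z})^d$ by $r(x_j)=z_j$ if $f_j\in[0,2^i)$ and $r(x_j)=z_j+2^{i+1}$ if $f_j\in[2^i,2^{i+1})$. Then $r\in\sigma$.
   Context: An object is a compact subset of $\mathbb{R}^d$ with non-empty interior; $\partial\sigma$ is its boundary; $d_\infty$ is the $L_\infty$ distance; $p(x_j)$ is the $j$th coordinate of $p$; $\beta\mathbb{Z}=\{\beta z:z\in\mathbb{Z}\}$. For $x\in\sigma$, $\alpha(x)=\min_{y\in\partial\sigma}d_\infty(x,y)/\max_{y\in\partial\sigma}d_\infty(x,y)$; a center of $\sigma$ is a point $c\in\sigma$ maximizing $\alpha(x)$ over $x\in\sigma$, and the width of $\sigma$ is $\min_{y\in\partial\sigma}d_\infty(c,y)$. *)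

(* Defs.v *)
(* Points of R^d are row vectors 'rV[R]_d, with the
   library's (product) topology on matrices. *)
From HB Require Import structures.
From mathcomp Require Import all_boot all_order all_algebra.
From mathcomp Require Import all_classical all_reals all_analysis.
Set Implicit Arguments. Unset Strict Implicit. Unset Printing Implicit Defensive.
Import Order.TTheory GRing.Theory Num.Theory.
Import numFieldNormedType.Exports.
Local Open Scope classical_set_scope.
Local Open Scope ring_scope.

Section Defs.
Variables (R : realType) (d : nat).
Implicit Types (sigma : set 'rV[R]_d) (x y : 'rV[R]_d).

Definition dinf x y : R := \big[Num.max/0]_(j < d) `|x ord0 j - y ord0 j|.

Definition is_object sigma := compact sigma /\ interior sigma !=set0.

Definition boundary sigma := closure sigma `\` interior sigma.

Definition mindist sigma x : R := inf [set dinf x y | y in boundary sigma].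
Definition maxdist sigma x : R := sup [set dinf x y | y in boundary sigma].

Definition alpha sigma x : R := mindist sigma x / maxdist sigma x.

Definition is_center sigma c := sigma c /\ forall x, sigma x -> alpha sigma x <= alpha sigma c.

Definition width_at sigma c : R := mindist sigma c.
End Defs.

(* Main.v *)
Require Import Defs.
From HB Require Import structures.
From mathcomp Require Import all_boot all_order all_algebra.
From mathcomp Require Import all_classical all_reals all_analysis.
From mathcomp Require Import lra.
Import Order.TTheory GRing.Theory Num.Theory.
Import numFieldNormedType.Exports.
Local Open Scope classical_set_scope.
Local Open Scope ring_scope.

Lemma dinf_ge0 (R : realType) (d : nat) (x y : 'rV[R]_d) : 0 <= dinf x y.
Proof.
rewrite /dinf; elim/big_ind: _ => //.
by move=> a b a0 b0; rewrite le_max a0.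
Qed.

Lemma dinf_le (R : realType) (d : nat) (x y : 'rV[R]_d) (B : R) :
  0 <= B -> (forall j, `|x ord0 j - y ord0 j| <= B) -> dinf x y <= B.
Proof.
move=> B0 H; rewrite /dinf; elim/big_ind: _ => //.
by move=> a b a0 b0; rewrite ge_max a0.
Qed.

Lemma seg_cont (R : realType) (d : nat) (c r : 'rV[R]_d) :
  continuous (fun t : R => c + t *: (r - c)).
Proof.
move=> t.
have := (@continuousD R _ R (fun=> c) (fun t => t *: (r - c)) t).
apply; first exact: cst_continuous.
apply: continuousZr_tmp. exact: cvg_id.
Qed.

Theorem lemma5 (R : realType) (d : nat) (hd : (0 < d)%N)
  (sigma : set 'rV[R]_d) (c : 'rV[R]_d) (i : nat) (r : 'rV[R]_d) :
  is_object sigma ->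
  is_center sigma c ->
  1 <= width_at sigma c ->
  (* i = floor (log_2 w) *)
  (2 ^+ i <= width_at sigma c /\ width_at sigma c < 2 ^+ i.+1) ->
  (forall j : 'I_d, exists (z : int) (f : R),
      c ord0 j = z%:~R * 2 ^+ i.+1 + f /\ 0 <= f < 2 ^+ i.+1 /\
      (f < 2 ^+ i -> r ord0 j = z%:~R * 2 ^+ i.+1) /\
      (2 ^+ i <= f -> r ord0 j = z%:~R * 2 ^+ i.+1 + 2 ^+ i.+1)) ->
  sigma r.
Proof.
move=> [cpt _] [sc _] w1 [wi _] Hr.
set w := width_at sigma c in w1 wi.
have scl : closed sigma := compact_closed (@norm_hausdorff _ _) cpt.
have Hb : forall y, boundary sigma y -> w <= dinf c y.
  move=> y yb; rewrite /w /width_at /mindist.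
  apply: (ge_inf); last by exists y.
  by exists 0 => _ [z _ <-]; exact: dinf_ge0.
have i0 : (0 : R) < 2 ^+ i by apply: exprn_gt0.
have Hd : forall j, `|c ord0 j - r ord0 j| <= 2 ^+ i.
  move=> j; have [z [f [-> [/andP [f0 f1] [H1 H2]]]]] := Hr j.
  have e : (2 : R) ^+ i.+1 = 2 ^+ i + 2 ^+ i by rewrite exprS mulr2n mulrDl mul1r.
  set a := z%:~R * _ in H1 H2 *.
  rewrite e in f1 H2.
  case: (ltP f (2 ^+ i)) => hf.
    rewrite H1 // ler_norml; apply/andP; split; lra.
  rewrite H2 // ler_norml; apply/andP; split; lra.
pose p := fun t : R => c + t *: (r - c).
have Hp : forall t, 0 <= t -> dinf c (p t) <= t * 2 ^+ i.
  move=> t t0; apply: dinf_le; first exact: mulr_ge0 (ltW i0).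
  move=> j; rewrite /p !mxE opprD addrA subrr sub0r normrN normrM ger0_norm //.
  by rewrite ler_wpM2l // distrC Hd.
case: (pselect (closure sigma r)) => [rc|rnc].
  by rewrite (closure_id sigma).1.
have p0 : p 0 = c by rewrite /p scale0r addr0.
have p1 : p 1 = r by rewrite /p scale1r addrC subrK.
have cint : sigma° c.
  apply: contrapT => cni.
  have : w <= dinf c c.
    by apply: Hb; split => //; exact: subset_closure.
  have := Hp 0 (lexx 0); rewrite p0 mul0r => h1 h2; lra.
pose K := [set p t | t in `[(0:R), 1]].
have Kc : connected K.
  apply: connected_continuous_connected; first exact: segment_connected.
  apply: continuous_subspaceT; exact: seg_cont.
have KB : K `&` sigma° = K.
  apply: Kc.
  - exists c; split => //; exists 0 => //; rewrite /= in_itv /= lexx ler01 //=.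
  - by exists (interior sigma) => //; apply: open_interior.
  - exists (closure sigma); first exact: closed_closure.
    apply/seteqP; split => x [Kx Hx]; split => //.
      by apply: subset_closure; apply: interior_subset.
    apply: contrapT => xni.
    case: Kx => t; rewrite /= in_itv /= => /andP [t0 t1] ptx.
    case: (eqVneq t 1) => [t1e|tn1].
      by apply: rnc; rewrite -p1 -t1e ptx.
    have tlt : t < 1 by rewrite lt_neqAle tn1.
    have : w <= dinf c x by apply: Hb.
    rewrite -ptx; have := Hp t t0.
    have : t * 2 ^+ i < 2 ^+ i by rewrite -[X in _ < X]mul1r ltr_pM2r.
    lra.
have : K r by exists 1 => //; rewrite /= in_itv /= ler01 lexx.
by rewrite -KB => -[_ /interior_subset].
Qed.
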